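(* Let $k\ge 1$ and let $K$ be a subgroup of the cyclic group $\mathbb{Z}_{2^k}$. Then $\Gamma_{\mathbb{Z}_{2^k},K}$ admits a perfect code if and only if $|K|\in\{1,2,2^k\}$.
   Context: For a subgroup $H$ of a finite abelian group $A$ (written additively with identity $0$), the subgroup sum graph $\Gamma_{A,H}$ is the simple undirected graph with vertex set $A$ in which distinct vertices $x,y$ are adjacent if and only if $x+y\in H\setminus\{0\}$. A perfect code in a graph is a set $C$ of vertices that is independent and such that every vertex not in $C$ is adjacent to exactly one vertex of $C$. *)

(* Defs.v *)
From mathcomp Require Import all_boot all_algebra all_fingroup.
Set Implicit Arguments. Unset Strict Implicit. Unset Printing Implicit Defensive.
Import GRing.Theory.
Local Open Scope ring_scope.

Definition subgroup_sum_adj (A : finZmodType) (H : {set A}) : rel A :=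
  fun x y => [&& x != y, x + y \in H & x + y != 0].

Definition perfect_code (V : finType) (e : rel V) (C : {set V}) : Prop :=
  (forall x y, x \in C -> y \in C -> ~~ e x y) /\
  (forall x, x \notin C -> #|[set y in C | e x y]| = 1%N).

Definition has_perfect_code (V : finType) (e : rel V) : Prop :=
  exists C : {set V}, perfect_code e C.

(* Main.v *)
Require Import Defs.
From mathcomp Require Import all_boot all_algebra all_fingroup all_solvable zify.
Set Implicit Arguments. Unset Strict Implicit. Unset Printing Implicit Defensive.
Import GRing.Theory.

Section S.
Variable p' : nat.
Local Notation N := p'.+2.
Local Notation T := 'I_N.

Lemma cardK_dvd (K : {group T}) : (#|K| %| N)%N.
Proof.
have := cardSg (subsetT K); by rewrite cardsT card_ord.
Qed.

Lemma inK (K : {group T}) (x : T) : (x \in K) = ((N %/ #|K|) %| x)%N.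
Proof.
have hd := cardK_dvd K.
have oa : #[Zp1 : T]%g = N by rewrite order_Zp1.
have : K \in [set H : {group T} | H \subset <[Zp1 : T]>%g & #|H| == #|K|].
  by rewrite inE -Zp_cycle subsetT eqxx.
rewrite cycle_sub_group oa // inE => /eqP def.
have mdvd : (N %/ #|K| %| N)%N.
  by apply/dvdnP; exists #|K|; rewrite mulnC divnK.
move: mdvd def; move: (N %/ #|K|) => m mdvd ->.
apply/cycleP/idP.
  case=> i ->; rewrite -expgM Zp_expg /=.
  rewrite modnMml mul1n /dvdn (modn_dvdm _ mdvd) -/(dvdn _ _); by rewrite dvdn_mulr.
move=> /dvdnP [q hq]; exists q.
by rewrite -expgM -{1}[x]Zp1_expgz hq mulnC.
Qed.
Lemma valD (x y : T) : val (x + y)%R = ((val x + val y) %% N)%N.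
Proof. by []. Qed.


Section Pos.
Variable K : {group T}.

Lemma pc1 : #|K| = 1%N -> has_perfect_code (subgroup_sum_adj K).
Proof.
move=> /eqP/cards1P [w hw].
have w0 : w = 0%R by have := group1 K; rewrite hw inE FinRing.zmod1gE => /eqP.
exists setT; split => [x y _ _|x]; last by rewrite inE.
by rewrite /subgroup_sum_adj hw w0 inE andbN andbF.
Qed.

Lemma pcN : #|K| = N -> has_perfect_code (subgroup_sum_adj K).
Proof.
move=> hK.
have KT : K :=: setT.
  by apply/eqP; rewrite eqEcard subsetT cardsT card_ord hK leqnn.
exists [set 0%R]; split => [x y|x].
  by rewrite !inE => /eqP -> /eqP ->; rewrite /subgroup_sum_adj eqxx.
rewrite inE => x0.
suff -> : [set y in [set 0%R] | subgroup_sum_adj K x y] = [set 0%R] by rewrite cards1.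
apply/setP => y; rewrite !inE /subgroup_sum_adj KT inE.
case: (eqVneq y 0%R) => [->|] //=; by rewrite addr0 x0.
Qed.

Lemma pc2 : #|K| = 2%N -> has_perfect_code (subgroup_sum_adj K).
Proof.
move=> /eqP/cards2P [a [b [ab hK]]].
have K0 : (0%R : T) \in K by rewrite -FinRing.zmod1gE group1.
have [g [g0 hK']] : exists g : T, g != 0%R /\ K :=: [set 0%R; g].
  rewrite hK !inE in K0; case/orP: K0 => /eqP ea; subst.
    by exists b; split; first by rewrite eq_sym.
  by exists a; split => //; rewrite setUC.
have hg z : (z \in K) && (z != 0%R) = (z == g).
  rewrite hK' !inE; case: (eqVneq z 0%R) => [->|nz].
    by rewrite eq_sym (negbTE g0).
  by rewrite andbT.
have adj x y : subgroup_sum_adj K x y = (x != y) && (x + y == g)%R.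
  by rewrite /subgroup_sum_adj hg.
exists [set x : T | (val x <= val (g - x)%R)%N]; split => [x y|x].
  rewrite !inE adj => hx hy; apply/negP => /andP [xy /eqP sxy].
  have ey : y = (g - x)%R by rewrite -sxy addrC addKr.
  have ex : x = (g - y)%R by rewrite -sxy addrK.
  move: hx hy; rewrite -ey -ex => h1 h2.
  by move: xy; rewrite -val_eqE eqn_leq h1 h2.
rewrite inE -ltnNge => hx.
suff -> : [set y in [set x0 : T | (val x0 <= val (g - x0)%R)%N] | subgroup_sum_adj K x y] = [set (g - x)%R] by rewrite cards1.
apply/setP => y; rewrite !inE adj.
apply/idP/idP.
  by case/and3P => _ _ /eqP <-; rewrite addrC addKr.
move/eqP => ->.
have e1 : (g - (g - x) = x)%R by rewrite opprB addrC subrK.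
have e2 : (x + (g - x) = g)%R by rewrite addrC subrK.
rewrite e1 e2 eqxx andbT (ltnW hx) /=; apply/negP => /eqP hh.
by move: hx; rewrite -hh ltnn.
Qed.
End Pos.
Variables (K : {group T}) (h d : nat).
Hypothesis inK : forall x : T, (x \in K) = (2 * h %| x)%N.
Hypothesis hN : N = (2 * h * (2 * d))%N.
Hypothesis h0 : (0 < h)%N.
Hypothesis d1 : (1 < d)%N.

Definition P (x : T) := (val x %% (2 * h) == h)%N.

Lemma L1 x y : P x -> P y -> (x + y)%R \in K.
Proof.
rewrite /P inK valD => /eqP hx /eqP hy.
rewrite /dvdn (modn_dvdm _ (_ : 2 * h %| N)%N); last by rewrite hN dvdn_mulr.
by rewrite -modnDm hx hy addnn -mul2n modnn.
Qed.

Lemma L2 x y : P x -> (x + y)%R \in K -> P y.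
Proof.
rewrite /P inK valD => /eqP hx.
rewrite /dvdn (modn_dvdm _ (_ : 2 * h %| N)%N); last by rewrite hN dvdn_mulr.
rewrite -modnDm hx => /eqP hs; apply/eqP.
have := ltn_pmod (val y) (_ : 0 < 2 * h)%N.
move: hs; move: (val y %% (2*h))%N => r /eqP; rewrite -/(dvdn _ _) => /dvdnP [t ht].
have H: (0 < 2*h)%N by lia. move=> /(_ H) hr.
move: ht; case: t => [|[|t]] ht; nia.
Qed.

Lemma L3 x : P x -> (x + x)%R != 0%R.
Proof.
rewrite /P => /eqP hx; apply/negP => /eqP /(congr1 val).
rewrite valD /= => /eqP; rewrite -/(dvdn _ _).
have {}hx : (nat_of_ord x %% (2*h) = h)%N := hx.
move: (nat_of_ord x) hx => v hx /dvdnP [t ht].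
move: ht; rewrite (divn_eq v (2*h)) hx.
move: (v %/ (2 * h))%N => q ht. rewrite hN in ht.
have : (2*h*(2*q+1) == 2*h*(2*(d*t)))%N by apply/eqP; lia.
rewrite eqn_pmul2l; last lia. move/eqP; lia.
Qed.

Lemma three (X : eqType) (a b c u v : X) : a != b -> a != c -> b != c ->
  exists2 z, z \in [:: a; b; c] & (z != u) && (z != v).
Proof.
move=> ab ac bc.
have mem1 : a \in [:: a; b; c] by rewrite !inE eqxx.
have mem2 : b \in [:: a; b; c] by rewrite !inE eqxx orbT.
have mem3 : c \in [:: a; b; c] by rewrite !inE eqxx !orbT.
case: (eqVneq a u) => [au|au]; case: (eqVneq a v) => [av|av].
- by exists b => //; rewrite -au -av eq_sym ab.
- case: (eqVneq b v) => [bv|bv].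
  + by exists c => //; rewrite -au -bv eq_sym ac eq_sym bc.
  + by exists b => //; rewrite bv andbT -au eq_sym.
- case: (eqVneq b u) => [bu|bu].
  + by exists c => //; rewrite -av -bu eq_sym bc eq_sym ac.
  + by exists b => //; rewrite bu -av eq_sym.
- by exists a => //; rewrite au av.
Qed.

Lemma no_pc : ~ has_perfect_code (subgroup_sum_adj K).
Proof.
case=> C [indep uniq1].
pose e := subgroup_sum_adj K.
have adjP x y : P x -> e x y -> P y.
  by move=> px /and3P [_ xy _]; apply: L2 px xy.
have adjE x y : P x -> P y -> e x y = (x != y) && (x + y != 0)%R.
  by move=> px py; rewrite /e /subgroup_sum_adj L1.
pose c (t : nat) : T := inZp (h + t * (2 * h)).
have vc t : (t < 3)%N -> val (c t) = (h + t * (2*h))%N.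
  move=> t3; rewrite /= modn_small //; rewrite hN; nia.
have Pc t : (t < 3)%N -> P (c t).
  move=> t3; rewrite /P vc // addnC modnMDl modn_small //; lia.
have cne t1 t2 : (t1 < 3)%N -> (t2 < 3)%N -> t1 != t2 -> c t1 != c t2.
  move=> h1 h2 /eqP ne; apply/negP => /eqP /(congr1 val).
  rewrite !vc //; nia.
have Pneg x : P x -> P (- x)%R.
  by move=> px; apply: (L2 px); rewrite subrr group1.
case: (boolP [exists x, P x && (x \in C)]) => [/existsP [x /andP [px xC]]| none].
  have [z zin /andP [zx zxn]] := @three _ _ _ _ (- x)%R x (cne 0 1 erefl erefl erefl)
    (cne 0 2 erefl erefl erefl) (cne 1 2 erefl erefl erefl).
  have pz : P z by move: zin; rewrite !inE => /or3P [] /eqP ->; apply: Pc.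
  have exz : e x z by rewrite adjE // eq_sym zxn addrC addr_eq0 zx.
  have zC : z \notin C by apply/negP => zC; by move: (indep _ _ xC zC) => /negP; apply.
  have nxC : (- x)%R \notin C.
    apply/negP => nxC.
    have /eqP/cards1P [w hw] := uniq1 _ zC.
    have : x \in [set y in C | e z y].
      by rewrite inE xC /= adjE // zxn addr_eq0 zx.
    have : (- x)%R \in [set y in C | e z y].
      by rewrite inE nxC /= adjE ?Pneg // zx subr_eq0 zxn.
    rewrite hw !inE => /eqP h1 /eqP h2.
    have := L3 px; by rewrite {2}h2 -h1 subrr eqxx.
  have /eqP/cards1P [w hw] := uniq1 _ nxC.
  have : w \in [set y in C | e (- x)%R y] by rewrite hw set11.
  rewrite inE => /andP [wC ew].
  have pw : P w := adjP _ _ (Pneg _ px) ew.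
  move: ew; rewrite adjE ?Pneg // => /andP [nw nw0].
  have : ~~ e x w := indep _ _ xC wC.
  rewrite adjE //; move/negP; apply; apply/andP; split.
    by apply: contra nw0 => /eqP ->; rewrite addNr.
  by apply: contra nw; rewrite addrC addr_eq0 eq_sym.
have c0C : c 0%N \notin C.
  by apply/negP => h1; move/existsP: none; apply; exists (c 0%N); rewrite Pc.
have /eqP/cards1P [w hw] := uniq1 _ c0C.
have : w \in [set y in C | e (c 0%N) y] by rewrite hw set11.
rewrite inE => /andP [wC ew].
have pw : P w := adjP _ _ (Pc 0%N erefl) ew.
by move/existsP: none; apply; exists w; rewrite pw.
Qed.
End S.

Unset Implicit Arguments.
Theorem corollary3p10 (k : nat) (hk : (1 <= k)%N) (K : {group 'Z_(2 ^ k)}) :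
  has_perfect_code (subgroup_sum_adj K) <-> (#|K| \in [:: 1; 2; 2 ^ k])%N.
Proof.
have hN : (Zp_trunc (2 ^ k)).+2 = 2 ^ k.
  by apply: Zp_cast; rewrite -{1}(expn0 2) ltn_exp2l.
have := cardK_dvd K; rewrite hN => /(dvdn_pfactor _ _ (isT : prime 2)) [j jk hj].
split.
  move=> hpc; rewrite hj !inE.
  case: j jk hj => [|[|j]] jk hj; rewrite ?eqxx ?orbT //.
  case: (eqVneq j.+2 k) => [->|jk2]; rewrite ?eqxx ?orbT //.
  exfalso.
  have [l hl] : exists l, k = (j.+2 + l.+1)%N.
    by exists (k - j.+3)%N; lia.
  apply: (@no_pc _ K (2 ^ l) (2 ^ j.+1)) hpc.
  - move=> x; rewrite inK; congr (_ %| _); rewrite hN hj hl expnD mulKn ?expn_gt0 //.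
    by rewrite expnS.
  - by rewrite hN hl expnD !expnS; lia.
  - by rewrite expn_gt0.
  - by rewrite -{1}(expn0 2) ltn_exp2l.
rewrite !inE => /or3P [] /eqP h.
- exact: pc1.
- exact: pc2.
- by apply: pcN; rewrite hN.
Qed.
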